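(* For every $n\ge1$, the positive monomial $P(x)=\prod_{i=1}^n x_i$ on $\{0,1\}^n$ has a quadratization using $\lfloor (n-1)/2\rfloor$ auxiliary variables.
   Context: A quadratization of $f:\{0,1\}^n\to\mathbb{R}$ using $m$ auxiliary variables is a polynomial $g(x,y)$ of degree at most $2$ in $x_1,\ldots,x_n,y_1,\ldots,y_m$ such that $f(x)=\min\{g(x,y):y\in\{0,1\}^m\}$ for all $x\in\{0,1\}^n$. *)

(* Defs.v *)
From HB Require Import structures.
From mathcomp Require Import all_boot all_order all_algebra.
Set Implicit Arguments. Unset Strict Implicit. Unset Printing Implicit Defensive.
Import Order.TTheory GRing.Theory Num.Theory.
Local Open Scope ring_scope.

Record quad_poly (R : nzRingType) (N : nat) := QuadPoly {
  qp_const : R;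
  qp_lin : 'I_N -> R;
  qp_quad : 'I_N -> 'I_N -> R }.

Definition qp_eval (R : nzRingType) (N : nat) (g : quad_poly R N)
    (z : 'I_N -> bool) : R :=
  qp_const g + \sum_(i < N) qp_lin g i * (z i)%:R
  + \sum_(i < N) \sum_(j < N) qp_quad g i j * (z i)%:R * (z j)%:R.

Definition concat_bits (n m : nat) (x : {ffun 'I_n -> bool})
    (y : {ffun 'I_m -> bool}) : 'I_(n + m) -> bool :=
  fun k => match split k with inl i => x i | inr j => y j end.

(* g is a quadratization of f using m auxiliary variables:
   f(x) = min_{y in {0,1}^m} g(x,y) for all x in {0,1}^n. *)
Definition is_quadratization (R : realFieldType) (n m : nat)
    (f : {ffun 'I_n -> bool} -> R) (g : quad_poly R (n + m)) : Prop :=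
  forall x : {ffun 'I_n -> bool},
    (exists y : {ffun 'I_m -> bool}, qp_eval g (concat_bits x y) = f x) /\
    (forall y : {ffun 'I_m -> bool}, f x <= qp_eval g (concat_bits x y)).

Definition has_quadratization (R : realFieldType) (n m : nat)
    (f : {ffun 'I_n -> bool} -> R) : Prop :=
  exists g : quad_poly R (n + m), is_quadratization f g.

Definition pos_monomial (R : nzRingType) (n : nat) (x : {ffun 'I_n -> bool}) : R :=
  \prod_(i < n) (x i)%:R.

(* Main.v *)
Require Import Defs.
From HB Require Import structures.
From mathcomp Require Import all_boot all_order all_algebra.
From mathcomp Require Import ring lra zify.
Set Implicit Arguments. Unset Strict Implicit. Unset Printing Implicit Defensive.
Import Order.TTheory GRing.Theory Num.Theory.
Local Open Scope ring_scope.

Section Q.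
Variable R : realFieldType.
Variables n m : nat.
Variable w : 'I_n -> nat.

Definition linF (u : ('I_n + 'I_m)%type) : R :=
  match u with inl i => - (w i)%:R / 2 | inr j => (4 * j + 3)%:R end.
Definition quadF (u v : ('I_n + 'I_m)%type) : R :=
  match u, v with
  | inl i, inl i' => (w i)%:R * (w i')%:R / 2
  | inl i, inr j => -2 * (w i)%:R
  | _, _ => 0 end.
Definition G := QuadPoly 0 (fun k : 'I_(n + m) => linF (split k))
   (fun k l : 'I_(n + m) => quadF (split k) (split l)).
Lemma sum_split (F : ('I_n + 'I_m)%type -> R) :
  \sum_(k < n + m) F (split k) = \sum_(i < n) F (inl i) + \sum_(j < m) F (inr j).
Proof.
rewrite big_split_ord /=; congr (_ + _); apply: eq_bigr => i _.
  by rewrite (unsplitK (inl i)).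
by rewrite (unsplitK (inr i)).
Qed.

Lemma eval_G (x : {ffun 'I_n -> bool}) (y : {ffun 'I_m -> bool}) :
  forall s : R, s = \sum_i (w i)%:R * ((x i : bool) : nat)%:R ->
  qp_eval G (concat_bits x y) =
  s * (s - 1) / 2 + \sum_(j < m) ((y j : bool) : nat)%:R * ((4 * j + 3)%:R - 2 * s).
Proof.
move=> s sE.
pose zu (u : ('I_n + 'I_m)%type) := match u with inl i => x i | inr j => y j end.
rewrite /qp_eval /= add0r.
rewrite (sum_split (fun u => linF u * (zu u)%:R)).
rewrite (sum_split (fun u => \sum_(l < n + m) quadF u (split l) * (zu u)%:R * (zu (split l))%:R)).
have E u : \sum_(l < n + m) quadF u (split l) * (zu u)%:R * (zu (split l))%:R =
   \sum_i quadF u (inl i) * (zu u)%:R * (zu (inl i))%:R + \sum_j quadF u (inr j) * (zu u)%:R * (zu (inr j))%:R.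
  by rewrite (sum_split (fun v => quadF u v * (zu u)%:R * (zu v)%:R)).
rewrite (eq_bigr _ (fun i _ => E (inl i))) (eq_bigr _ (fun j _ => E (inr j))).
rewrite /= /zu /linF /quadF.
have h0 : \sum_(i < m) (\sum_(i0 < n) 0 * ((y i : bool) : nat)%:R * ((x i0 : bool) : nat)%:R +
       \sum_(j < m) 0 * ((y i : bool) : nat)%:R * ((y j : bool) : nat)%:R) = 0 :> R.
  by apply: big1 => i _; rewrite !big1 ?addr0 // => k _; rewrite !mul0r.
rewrite h0 addr0 big_split /=.
have h1 : \sum_(i < n) \sum_(i0 < n) (w i)%:R * (w i0)%:R / 2 * ((x i : bool) : nat)%:R * ((x i0 : bool) : nat)%:R = s * s / 2 :> R.
  rewrite sE mulr_suml mulr_suml; apply: eq_bigr => i _.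
  rewrite mulr_sumr mulr_suml; apply: eq_bigr => k _; ring.
have h2 : \sum_(i < n) \sum_(j < m) -2 * (w i)%:R * ((x i : bool) : nat)%:R * ((y j : bool) : nat)%:R
   = -2 * \sum_(j < m) ((y j : bool) : nat)%:R * s :> R.
  rewrite exchange_big mulr_sumr; apply: eq_bigr => j _.
  rewrite sE !mulr_sumr; apply: eq_bigr => k _; ring.
have h3 : \sum_(i < n) 1 *- w i / 2 * ((x i : bool) : nat)%:R = - s / 2 :> R.
  rewrite sE mulNr mulr_suml -sumrN; apply: eq_bigr => i _; ring.
have h4 : \sum_(j < m) ((y j : bool) : nat)%:R * ((4 * j + 3)%:R - 2 * s) =
   \sum_(j < m) (4 * j + 3)%:R * ((y j : bool) : nat)%:R + -2 * \sum_(j < m) ((y j : bool) : nat)%:R * s :> R.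
  rewrite mulr_sumr -big_split; apply: eq_bigr => j _ /=; ring.
rewrite h1 h2 h3 h4; ring.
Qed.
End Q.

Section Arith.
Variable R : realFieldType.

Lemma ind_sum (c k : nat) (f : nat -> R) : (c <= k)%N ->
  \sum_(j < k) (if (j < c)%N then f j else 0) = \sum_(j < c) f j.
Proof.
elim: k => [|k IH] Hc.
  by move: Hc; rewrite leqn0 => /eqP ->; rewrite !big_ord0.
have [Hck|Hck] := leqP c k.
  by rewrite big_ord_recr /= IH // ltnNge Hck /= addr0.
have -> : c = k.+1 by apply/eqP; rewrite eqn_leq Hc Hck.
by apply: eq_bigr => j _; rewrite ltn_ord.
Qed.

Lemma closed_sum (c : nat) (t : R) :
  \sum_(j < c) ((4 * j + 3)%:R - 2 * t) = (c * (2 * c + 1))%:R - 2 * c%:R * t.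
Proof.
elim: c => [|c IH]; first by rewrite big_ord0 mul0n mulr0 mul0r subr0.
rewrite big_ord_recr /= IH.
rewrite !natrD !natrM !natrD !natrM /=. rewrite -[c.+1]addn1 !natrD. ring.
Qed.

Lemma key (k s : nat) : (s <= k.*2.+2)%N ->
  (s%:R : R) * (s%:R - 1) / 2 +
  \sum_(j < k) (if (j < s./2)%N then (4 * j + 3)%:R - 2 * s%:R else 0)
  = ((s == k.*2.+2) : nat)%:R.
Proof.
move=> Hs.
have sE := odd_double_half s.
set h := s./2 in sE *. set b := odd s in sE.
have hb : ((b : nat) <= 1)%N by case: b {sE}.
have [Hhk|Hhk] := leqP h k.
  rewrite (ind_sum (fun j => (4 * j + 3)%:R - 2 * s%:R)) // closed_sum.
  have -> : (s == k.*2.+2) = false by apply/negbTE; move: sE Hhk; rewrite -!muln2; lia.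
  rewrite -sE -muln2 !natrD !natrM.
  by case: b {sE hb} => /=; field.
have hk : h = k.+1 by move: sE Hs; rewrite -!muln2; lia.
have bz : b = false :> bool by clear hb; move: sE Hs; rewrite hk -!muln2; case: b => /=; lia.
rewrite (eq_bigr (fun j : 'I_k => (4 * j + 3)%:R - 2 * s%:R)); last first.
  by move=> j _; rewrite hk ltnS ltnW.
have -> : s = k.*2.+2 by rewrite -sE hk bz.
rewrite closed_sum eqxx -[k.*2.+2]addn2 -muln2 !natrD !natrM /=. by field.
Qed.
End Arith.

Unset Implicit Arguments.
Set Strict Implicit.
Theorem theorem5 (R : realFieldType) (n : nat) :
  (1 <= n)%N -> has_quadratization ((n - 1)./2) (@pos_monomial R n).
Proof.
move=> n1.
set k := (n - 1)./2.
set Np := k.*2.+2.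
have i0lt : (n.-1 < n)%N by rewrite ltn_predL.
pose i0 : 'I_n := Ordinal i0lt.
pose w (i : 'I_n) := (1 + (i == i0) * (Np - n))%N.
have Npn : (n <= Np)%N.
  have := odd_double_half (n - 1); rewrite /Np /k -!muln2.
  case: (odd (n - 1)) => /=; lia.
have sumw : (\sum_i w i = Np)%N.
  rewrite big_split /= sum1_card card_ord (bigD1 i0) //= eqxx mul1n.
  rewrite big1 ?addn0; first lia.
  by move=> i /negbTE ->.
exists (G R k w) => x.
pose sN := (\sum_i w i * x i)%N.
have sNc : (sN + \sum_i w i * ~~ x i = Np)%N.
  rewrite -sumw /sN -big_split /=; apply: eq_bigr => i _.
  by case: (x i); rewrite /= ?muln1 ?muln0 ?addn0.
have sNle : (sN <= Np)%N by rewrite -sNc leq_addr.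
have Pm : pos_monomial R x = ((sN == Np) : nat)%:R :> R.
  rewrite /pos_monomial.
  case: (pickP (fun i => ~~ x i)) => [i Hi | Hall].
    rewrite (bigD1 i) //= (negbTE Hi) mul0r.
    have : (w i * ~~ x i <= \sum_i w i * ~~ x i)%N.
      by rewrite (bigD1 i) //= leq_addr.
    rewrite Hi muln1 /w => H.
    have H1 : (1 <= \sum_i w i * ~~ x i)%N by apply: leq_trans H; rewrite leq_addr.
    have -> : (sN == Np) = false by apply/eqP; move: H1 sNc; clear; lia.
    by [].
  rewrite big1; last by move=> i _; move: (Hall i) => /= /negbFE ->.
  have : (\sum_i w i * ~~ x i = 0)%N.
    by rewrite big1 // => i _; move: (Hall i) => /= ->; rewrite muln0.
  by move=> H; rewrite H addn0 in sNc; rewrite sNc eqxx.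
have sE : (sN%:R : R) = \sum_i (w i)%:R * ((x i : bool) : nat)%:R.
  by rewrite /sN natr_sum; apply: eq_bigr => i _; rewrite natrM.
pose ys := [ffun j : 'I_k => (j < sN./2)%N].
split.
  exists ys; rewrite (eval_G ys sE) Pm -(key R sNle); congr (_ + _).
  apply: eq_bigr => j _; rewrite ffunE.
  by case: (j < sN./2)%N; rewrite ?mul1r ?mul0r.
move=> y; rewrite (eval_G y sE) Pm -(key R sNle) lerD2l.
apply: ler_sum => j _.
have sEq := odd_double_half sN.
have hb : (odd sN <= 1)%N by case: (odd sN).
rewrite -muln2 in sEq.
have [Hj|Hj] := ltnP j sN./2.
  have Hl : (4 * j + 3)%:R - 2 * sN%:R <= 0 :> R.
    rewrite subr_le0 -natrM ler_nat; lia.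
  by case: (y j); rewrite ?mul1r ?mul0r.
have Hl : 0 <= (4 * j + 3)%:R - 2 * sN%:R :> R.
  rewrite subr_ge0 -natrM ler_nat; lia.
by case: (y j); rewrite ?mul1r ?mul0r.
Qed.
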